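(* Let $G=(V,E)$ be a graph with capacities $b_v\ge0$, demands $d_{u,e},d_{v,e}\ge0$ and profits $p_e\ge0$ for each edge $e=uv$, forming a conflict-free instance. Let $M'\subseteq E$ satisfy $\sum_{e\in\delta_{M'}(v)\setminus L(v)}d_{v,e}\le b_v$ for every $v\in V$, where $L(v)$ is a set of the two edges of $\delta_{M'}(v)$ with highest $d_{v,e}$ (or $L(v)=\delta_{M'}(v)$ if $|\delta_{M'}(v)|\le1$). Then one can find $M\subseteq M'$ with $\sum_{e\in\delta_M(v)}d_{v,e}\le b_v$ for all $v\in V$ and $p(M)\ge\frac{p(M')}{4}$.
   Context: The instance is conflict-free if for any two edges $e,f\in E$ and every vertex $v$, $\sum_{g\in\{e,f\}\cap\delta(v)}d_{v,g}\le b_v$. $\delta(v)$ is the set of edges incident to $v$, $\delta_{M'}(v)=\delta(v)\cap M'$, $p(M)=\sum_{e\in M}p_e$. *)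

(* Defs.v *)
From mathcomp Require Import all_boot all_order all_algebra.
Set Implicit Arguments. Unset Strict Implicit. Unset Printing Implicit Defensive.
Import Order.TTheory GRing.Theory Num.Theory.
Local Open Scope ring_scope.

(* A graph: finite vertex type V, finite edge type E, each edge e has two
   distinct endpoints (ends e).1 and (ends e).2 (parallel edges allowed). *)
Definition is_graph (V E : finType) (ends : E -> V * V) : Prop :=
  forall e, (ends e).1 != (ends e).2.

Definition delta (V E : finType) (ends : E -> V * V) (v : V) : {set E} :=
  [set e | ((ends e).1 == v) || ((ends e).2 == v)].

Definition deltaM (V E : finType) (ends : E -> V * V) (M : {set E}) (v : V)
  : {set E} := delta ends v :&: M.

Definition profit (R : numDomainType) (E : finType) (p : E -> R) (M : {set E}) : R :=
  \sum_(e in M) p e.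

Definition conflict_free (R : numDomainType) (V E : finType) (ends : E -> V * V)
  (b : V -> R) (d : V -> E -> R) : Prop :=
  forall (e f : E) (v : V),
    \sum_(g in [set e; f] :&: delta ends v) d v g <= b v.

Definition top_two (R : numDomainType) (E : finType) (w : E -> R)
  (S L : {set E}) : Prop :=
  [/\ L \subset S, #|L| = minn 2 #|S| &
      forall e f, e \in L -> f \in S :\: L -> w f <= w e].

(* Main.v *)
Require Import Defs.
From mathcomp Require Import all_boot all_order all_algebra.
Set Implicit Arguments. Unset Strict Implicit. Unset Printing Implicit Defensive.
Import Order.TTheory GRing.Theory Num.Theory.
Local Open Scope ring_scope.

Lemma sum_subset (R : numDomainType) (E : finType) (A B : {set E}) (F : E -> R) :
  A \subset B -> (forall x, 0 <= F x) -> \sum_(x in A) F x <= \sum_(x in B) F x.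
Proof.
move=> AB F0; rewrite [X in _ <= X](big_setID A) /= (setIidPr AB) lerDl.
by apply: sumr_ge0 => x _.
Qed.

Lemma card_le2 (E : finType) (A : {set E}) : (#|A| <= 2)%N ->
  A = set0 \/ exists e f, A = [set e; f].
Proof.
move=> h; rewrite -(set_enum A); move: h; rewrite cardE.
case: (enum A) => [|e [|f [|g r]]] //= _.
- by left; apply/setP => x; rewrite !inE.
- by right; exists e, e; apply/setP => x; rewrite !inE orbb.
- by right; exists e, f; apply/setP => x; rewrite !inE.
Qed.

Section Count.
Variable (R : numDomainType) (V : finType).

Definition cnt (u v : V) (x y : bool) : R :=
  \sum_(s : {ffun V -> bool}) ((s u == x) && (s v == y))%:R.

Lemma cnt_eq u v x y x' y' : u != v -> cnt u v x y = cnt u v x' y'.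
Proof.
move=> uv; pose a := x (+) x'; pose c := y (+) y'.
pose h (s : {ffun V -> bool}) : {ffun V -> bool} :=
  [ffun w => s w (+) ((w == u) && a) (+) ((w == v) && c)].
have hK : cancel h h.
  have key : forall b p q : bool, b (+) p (+) q (+) p (+) q = b by do 3 case.
  by move=> s; apply/ffunP => w; rewrite !ffunE key.
rewrite /cnt (reindex_inj (can_inj hK)); apply: eq_bigr => s _.
have vu : (v == u) = false by rewrite eq_sym (negbTE uv).
rewrite /h !ffunE eqxx (negbTE uv) vu /= /a /c; clear hK h a c; move: (s u) (s v) => su sv.
rewrite eqxx; by move: (su : bool) (sv : bool) x x' y y'; do 6 case.
Qed.

Lemma cnt4 u v x y : u != v -> 4 * cnt u v x y = #|{ffun V -> bool}|%:R.
Proof.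
move=> uv.
have -> : 4 * cnt u v x y = cnt u v true true + cnt u v true false
   + cnt u v false true + cnt u v false false.
  rewrite -!(cnt_eq x y _ _ uv).
  have -> : (4 : R) = 1+1+1+1 by rewrite -!natr1 ?add0r. by rewrite !mulrDl !mul1r.
rewrite /cnt -!big_split /= -sum1_card natr_sum; apply: eq_bigr => s _.
by case E1: (s u); case E2: (s v); rewrite /= ?addr0 ?add0r.
Qed.
End Count.

Theorem lemma5 (R : realFieldType) (V E : finType) (ends : E -> V * V)
  (b : V -> R) (d : V -> E -> R) (p : E -> R) (M' : {set E}) (L : V -> {set E}) :
  is_graph ends ->
  (forall v, 0 <= b v) ->
  (forall v e, 0 <= d v e) ->
  (forall e, 0 <= p e) ->
  conflict_free ends b d ->
  (forall v, top_two (d v) (deltaM ends M' v) (L v)) ->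
  (forall v, \sum_(e in deltaM ends M' v :\: L v) d v e <= b v) ->
  exists M : {set E},
    [/\ M \subset M',
        forall v, \sum_(e in deltaM ends M v) d v e <= b v
      & profit p M >= profit p M' / 4].
Proof.
move=> Hg b0 d0 p0 cf Htop Hrest.
pose M (s : {ffun V -> bool}) := [set e in M' |
  (s (ends e).1 == (e \in L (ends e).1)) && (s (ends e).2 == (e \in L (ends e).2))].
have feas s v : \sum_(e in deltaM ends (M s) v) d v e <= b v.
  have [LS cardL _] := Htop v.
  case sv: (s v).
  - have sub : deltaM ends (M s) v \subset L v.
      apply/subsetP => e; rewrite /deltaM /delta !inE.
      case/andP => /orP[/eqP h1|/eqP h2] /and3P[_ /eqP a /eqP c].
      + by move: a; rewrite h1 sv => <-.
      + by move: c; rewrite h2 sv => <-.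
    apply: le_trans (sum_subset sub (d0 v)) _.
    have : (#|L v| <= 2)%N by rewrite cardL geq_minl.
    case/card_le2 => [->|[e [f Lef]]]; first by rewrite big_set0.
    have := cf e f v; rewrite -Lef (setIidPl _) //.
    by apply: subset_trans LS _; apply/subsetP => g; rewrite /deltaM inE => /andP[].
  - have sub : deltaM ends (M s) v \subset deltaM ends M' v :\: L v.
      apply/subsetP => e; rewrite /deltaM /delta !inE.
      case/andP => /orP[/eqP h1|/eqP h2] /and3P[eM /eqP a /eqP c].
      + by move: a; rewrite h1 sv => <-; rewrite eM -h1 eqxx.
      + by move: c; rewrite h2 sv => <-; rewrite eM -h2 eqxx orbT.
    exact: le_trans (sum_subset sub (d0 v)) (Hrest v).
have key : \sum_(s : {ffun V -> bool}) profit p (M s) =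
           profit p M' / 4 *+ #|{ffun V -> bool}|.
  rewrite /profit.
  under eq_bigr => s _ do rewrite big_mkcond /=.
  rewrite exchange_big /= [in RHS]big_mkcond /= -mulr_natr !mulr_suml.
  apply: eq_bigr => e _.
  case eM: (e \in M').
  - rewrite -(@cnt4 R V _ _ (e \in L (ends e).1) (e \in L (ends e).2) (Hg e)).
    have -> : p e / 4 * (4 * cnt R (ends e).1 (ends e).2 (e \in L (ends e).1) (e \in L (ends e).2))
       = p e * cnt R (ends e).1 (ends e).2 (e \in L (ends e).1) (e \in L (ends e).2).
      by rewrite mulrA -(mulrA (p e)) mulVf ?mulr1 // pnatr_eq0.
    rewrite /cnt mulr_sumr; apply: eq_bigr => s _.
    by rewrite inE eM /=; case: ifP => _; rewrite ?mulr1 ?mulr0.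
  - by rewrite !mul0r big1 // => s _; rewrite inE eM.
case: (boolP [exists s, profit p M' / 4 <= profit p (M s)]).
- case/existsP => s hs; exists (M s); split => //.
  by apply/subsetP => e; rewrite inE => /andP[].
- rewrite negb_exists => /forallP H; exfalso.
  have : \sum_(s : {ffun V -> bool}) profit p (M s) <
         \sum_(s : {ffun V -> bool}) profit p M' / 4.
    apply: ltr_sum; first by apply/hasP; exists [ffun=> false]; rewrite ?mem_index_enum.
    by move=> s _; rewrite ltNge H.
  by rewrite key sumr_const ltxx.
Qed.
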